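(* Let $X,A^+,G,cost$ and the program $P$ be as in the context. For an interpretation $M$, let $c(M)=\sum_{\vec a\in A^+,\ a\in M} cost(\vec a)$. If $P$ has a stable model, then $\min\{c(M): M \text{ a stable model of } P\}=h^+$. If $P$ has no stable model, then $h^+=\infty$.
   Context: Delete-relaxed planning. Let $X$ be a finite set of atomic propositions, $A^+$ a finite set of actions, $G\subseteq X$ a goal set, and $cost:A^+\to\mathbb{Z}_{\ge 0}$. Each action $\vec a\in A^+$ has a precondition set $pre(\vec a)\subseteq X$ and an add set $add(\vec a)\subseteq X$. There are no delete effects and the initial state is $\emptyset$. A relaxed plan is a finite sequence $\vec a_1,\dots,\vec a_m$ of actions of $A^+$ such that, with $s_0=\emptyset$ and $s_i=s_{i-1}\cup add(\vec a_i)$, we have $pre(\vec a_i)\subseteq s_{i-1}$ for all $i$ and $G\subseteq s_m$. The cost of a relaxed plan is $\sum_i cost(\vec a_i)$. $h^+$ is the minimum cost of a relaxed plan, or $\infty$ if none exists. For every action $\vec a$ there is a propositional atom $a$ (its action atom). Action atoms are pairwise distinct and distinct from the elements of $X$. Logic programs. A normal rule has the form $h\leftarrow b_1,\dots,b_n,\mathtt{not}\,c_1,\dots,\mathtt{not}\,c_m$, and a choice rule has the form $\{h\}\leftarrow b_1,\dots,b_n,\mathtt{not}\,c_1,\dots,\mathtt{not}\,c_m$. The reduct $P^I$ contains: - $h\leftarrow b_1,\dots,b_n$ for each normal rule of $P$ with no $c_j\in I$; - $h\leftarrow b_1,\dots,b_n$ for each choice rule of $P$ with no $c_j\in I$ and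 $h\in I$. $I$ is a stable model of $P$ if $I$ is the least model of $P^I$. Program $P$ consists of: 1. $g\leftarrow\mathtt{not}\,g$ for every $g\in G$; 2. $\{a\}\leftarrow q_1,\dots,q_n$ for every $\vec a\in A^+$ with $pre(\vec a)=\{q_1,\dots,q_n\}$; 3. $p\leftarrow a$ for every $\vec a\in A^+$ and every $p\in add(\vec a)$. *)

(* Defs.v *)
From mathcomp Require Import all_boot.
Set Implicit Arguments. Unset Strict Implicit. Unset Printing Implicit Defensive.

Section LP.
Variable T : finType.

(* NormalRule h pos neg :  h <- pos, not neg
   ChoiceRule h pos neg :  {h} <- pos, not neg *)
Inductive rule :=
| NormalRule of T & seq T & seq T
| ChoiceRule of T & seq T & seq T.

Definition drule := (T * seq T)%type.

Definition reduct_rule (I : {set T}) (r : rule) : seq drule :=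
  match r with
  | NormalRule h pos neg =>
      if has (fun c => c \in I) neg then [::] else [:: (h, pos)]
  | ChoiceRule h pos neg =>
      if has (fun c => c \in I) neg || (h \notin I) then [::] else [:: (h, pos)]
  end.

Definition reduct (P : seq rule) (I : {set T}) : seq drule :=
  flatten [seq reduct_rule I r | r <- P].

Definition is_model (D : seq drule) (M : {set T}) : Prop :=
  forall r, r \in D -> all (fun b => b \in M) r.2 -> r.1 \in M.

Definition least_model (D : seq drule) (M : {set T}) : Prop :=
  is_model D M /\ forall M', is_model D M' -> M \subset M'.

Definition stable_model (P : seq rule) (I : {set T}) : Prop :=
  least_model (reduct P I) I.
End LP.

Section Planning.
Variables (X A : finType).
Variables (pre add : A -> {set X}) (G : {set X}) (cost : A -> nat).

Fixpoint final_state (s : {set X}) (pi : seq A) : {set X} :=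
  if pi is a :: pi' then final_state (s :|: add a) pi' else s.

Fixpoint executable (s : {set X}) (pi : seq A) : bool :=
  if pi is a :: pi' then (pre a \subset s) && executable (s :|: add a) pi'
  else true.

Definition relaxed_plan (pi : seq A) : bool :=
  executable set0 pi && (G \subset final_state set0 pi).

Definition plan_cost (pi : seq A) : nat := \sum_(a <- pi) cost a.

(* h^+ as an extended natural: None = infinity, Some n = min cost n *)
Definition hplus_is (v : option nat) : Prop :=
  match v with
  | None => forall pi, ~~ relaxed_plan pi
  | Some n => (exists pi, relaxed_plan pi /\ plan_cost pi = n) /\
              (forall pi, relaxed_plan pi -> n <= plan_cost pi)
  end.

(* atoms: elements of X (inl) and action atoms (inr); disjoint by construction *)
Definition atom := (X + A)%type.

Definition program : seq (rule atom) :=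
  [seq NormalRule (inl g) [::] [:: inl g] | g <- enum G] ++
  [seq ChoiceRule (inr a) [seq inl q | q <- enum (pre a)] [::] | a <- enum A] ++
  flatten [seq [seq NormalRule (inl p) [:: inr a] [::] | p <- enum (add a)]
          | a <- enum A].

Definition interp_cost (M : {set atom}) : nat :=
  \sum_(a : A | inr a \in M) cost a.
End Planning.

(* Main.v *)
Require Import Defs.
From mathcomp Require Import all_boot.
From Stdlib Require Import Classical.

Set Implicit Arguments.
Section S.
Variables (X A : finType) (pre add : A -> {set X}) (G : {set X}) (cost : A -> nat).
Local Notation prog := (program pre add G).
Local Notation atm := (atom X A).

Lemma reduct_prog (I : {set atm}) : reduct prog I =
  flatten [seq reduct_rule I (NormalRule (inl g : atm) [::] [:: inl g]) | g <- enum G] ++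
  flatten [seq reduct_rule I (ChoiceRule (inr a : atm) [seq inl q | q <- enum (pre a)] [::]) | a <- enum A] ++
  flatten [seq flatten [seq reduct_rule I (NormalRule (inl p : atm) [:: inr a] [::]) | p <- enum (add a)] | a <- enum A].
Proof.
rewrite /reduct /program !map_cat !flatten_cat -!map_comp; congr (_ ++ (_ ++ _)).
elim: (Finite.enum A) => //= a l IH; by rewrite map_cat flatten_cat -map_comp IH.
Qed.

Lemma mem_reduct (M : {set atm}) r : r \in reduct prog M ->
  [\/ exists g, [/\ g \in G, inl g \notin M & r = (inl g, [::])],
      exists a, inr a \in M /\ r = (inr a, [seq inl q | q <- enum (pre a)])
    | exists a p, p \in add a /\ r = (inl p, [:: inr a])].
Proof.
rewrite reduct_prog !mem_cat => /or3P [].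
- case/flatten_mapP => g; rewrite mem_enum => gG /=.
  case: ifP => // /negbT; rewrite /= orbF => gM; rewrite inE => /eqP ->.
  by apply: Or31; exists g.
- case/flatten_mapP => a _ /=. case: ifP => //= /negbT; rewrite negbK => aM; rewrite inE => /eqP ->.
  by apply: Or32; exists a.
- case/flatten_mapP => a _ /flatten_mapP [p]; rewrite mem_enum => pa /=; rewrite inE => /eqP ->.
  by apply: Or33; exists a, p.
Qed.

Lemma red1 (M : {set atm}) g : g \in G -> inl g \notin M ->
  ((inl g : atm), [::]) \in reduct prog M.
Proof.
move=> gG gM; rewrite reduct_prog !mem_cat; apply/or3P; apply: Or31.
by apply/flatten_mapP; exists g; rewrite ?mem_enum //= (negbTE gM) inE.
Qed.

Lemma red2 (M : {set atm}) a : inr a \in M ->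
  ((inr a : atm), [seq inl q | q <- enum (pre a)]) \in reduct prog M.
Proof.
move=> aM; rewrite reduct_prog !mem_cat; apply/or3P; apply: Or32.
by apply/flatten_mapP; exists a; rewrite ?mem_enum //= aM inE.
Qed.

Lemma red3 (M : {set atm}) a p : p \in add a ->
  ((inl p : atm), [:: inr a]) \in reduct prog M.
Proof.
move=> pa; rewrite reduct_prog !mem_cat; apply/or3P; apply: Or33.
apply/flatten_mapP; exists a; rewrite ?mem_enum //.
by apply/flatten_mapP; exists p; rewrite ?mem_enum //= inE.
Qed.

Definition condM (M M' : {set atm}) := [/\ forall g, g \in G -> inl g \notin M -> inl g \in M',
   forall a, inr a \in M -> pre a \subset [set x | inl x \in M'] -> inr a \in M'
 & forall a p, p \in add a -> inr a \in M' -> inl p \in M'].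

Lemma modelP (M M' : {set atm}) : is_model (reduct prog M) M' <-> condM M M'.
Proof.
split.
- move=> H; split.
  + move=> g gG gM; exact: (H _ (@red1 M g gG gM) isT).
  + move=> a aM sub; apply: (H _ (@red2 M a aM)); rewrite /= all_map; apply/allP => q.
    by rewrite mem_enum => qp /=; have := subsetP sub q qp; rewrite inE.
  + move=> a p pa aM'; apply: (H _ (@red3 M a p pa)) => /=; by rewrite aM'.
- case=> H1 H2 H3 r /mem_reduct [[g [gG gM ->]]|[a [aM ->]]|[a [p [pa ->]]]] /=.
  + by move=> _; apply: H1.
  + rewrite all_map => /allP al; apply: H2 => //; apply/subsetP => q qp; rewrite inE.
    by apply: (al q); rewrite mem_enum.
  + by rewrite andbT; apply: H3.
Qed.

Lemma final_sub (s : {set X}) (pi : seq A) : s \subset final_state add s pi.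
Proof.
elim: pi s => [|a pi IH] s /=; first exact: subxx.
apply: subset_trans (IH _); exact: subsetUl.
Qed.

Lemma final_add (s : {set X}) (pi : seq A) a : a \in pi -> add a \subset final_state add s pi.
Proof.
elim: pi s => //= b pi IH s; rewrite inE => /orP [/eqP->|ap].
  by apply: subset_trans (final_sub _ _); exact: subsetUr.
exact: IH.
Qed.

Lemma final_in (pi : seq A) (s : {set X}) (M' : {set atm}) : executable pre add s pi ->
  s \subset [set x | inl x \in M'] ->
  (forall a, a \in pi -> pre a \subset [set x | inl x \in M'] -> inr a \in M') ->
  (forall a p, p \in add a -> inr a \in M' -> inl p \in M') ->
  final_state add s pi \subset [set x | inl x \in M'] /\ {subset pi <= [pred a | inr a \in M']}.
Proof.
elim: pi s => [|a pi IH] s /=; first by move=> _ h _ _; split.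
move=> /andP [pa ex] sM H2 H3.
have aM : inr a \in M' by apply: H2; [exact: mem_head | exact: subset_trans sM].
have [f1 f2] : final_state add (s :|: add a) pi \subset [set x | inl x \in M'] /\
               {subset pi <= [pred a | inr a \in M']}.
  apply: IH => //.
    rewrite subUset sM /=; apply/subsetP => p pa'; rewrite inE; exact: H3 aM.
  by move=> b bp; apply: H2; rewrite inE bp orbT.
split => // b; rewrite inE => /orP [/eqP->|]; [exact: aM | exact: f2].
Qed.

Lemma exec_rcons (s : {set X}) (pi : seq A) a : executable pre add s (rcons pi a) =
  executable pre add s pi && (pre a \subset final_state add s pi).
Proof. by elim: pi s => [|b pi IH] s /=; rewrite ?andbT // IH andbA. Qed.

Definition Mpi (pi : seq A) : {set atm} :=
  [set x : atm | match x with inl p => p \in final_state add set0 pi | inr a => a \in pi end].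

Lemma plan_stable pi : relaxed_plan pre add G pi -> stable_model prog (Mpi pi).
Proof.
rewrite /relaxed_plan => /andP [ex Gs]. split.
- apply/modelP; split.
  + by move=> g gG; rewrite inE /= (subsetP Gs _ gG).
  + by move=> a aM _.
  + move=> a p pa; rewrite !inE /= => ap; exact: (subsetP (@final_add set0 pi a ap) p pa).
- move=> M' /modelP [H1 H2 H3].
  have H2' : forall a, a \in pi -> pre a \subset [set x | inl x \in M'] -> inr a \in M'.
    by move=> a ap; apply: H2; rewrite inE.
  have [fs ps] := @final_in pi set0 M' ex (sub0set _) H2' H3.
  apply/subsetP => -[x|a]; rewrite inE /=.
  + by move=> xf; have := subsetP fs x xf; rewrite inE.
  + exact: ps.
Qed.

Lemma sum_mem_le (s : seq A) : \sum_(a | a \in s) cost a <= \sum_(a <- s) cost a.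
Proof.
rewrite -(eq_bigl _ _ (mem_undup s)) -big_uniq ?undup_uniq //.
have hc : forall i, count_mem i (undup s) <= count_mem i s.
  move=> i; rewrite count_uniq_mem ?undup_uniq // mem_undup.
  case: (boolP (i \in s)) => //= h.
  by move: h; rewrite -has_pred1 has_count.
exact: (@sub_le_big_seq nat addn leq leqnn (fun x y => leq_addr y x) 0 A (undup s) s xpredT cost hc).
Qed.

Lemma cost_le pi : interp_cost cost (Mpi pi) <= plan_cost cost pi.
Proof.
rewrite /interp_cost (eq_bigl (fun a => a \in pi)); first exact: sum_mem_le.
by move=> a; rewrite inE.
Qed.

Lemma stable_G M : stable_model prog M -> forall g, g \in G -> inl g \in M.
Proof.
case=> /modelP [H1 _ _] _ g gG.
by case: (boolP (inl g \in M)) => // gM; have := H1 g gG gM; rewrite (negbTE gM).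
Qed.

Lemma maxplan (S : {set A}) n (pi : seq A) : executable pre add set0 pi -> {subset pi <= S} ->
  uniq pi -> #|[set a in S | a \notin pi]| <= n ->
  exists pi', [/\ executable pre add set0 pi', {subset pi' <= S}, uniq pi' &
     forall a, a \in S -> pre a \subset final_state add set0 pi' -> a \in pi'].
Proof.
elim: n pi => [|n IH] pi ex sub u c.
  exists pi; split=> // a aS _; move: c; rewrite leqn0 cards_eq0 => /eqP /setP /(_ a).
  by rewrite !inE aS /= => /negbFE.
case: (pickP [pred a | (a \in S) && (a \notin pi) && (pre a \subset final_state add set0 pi)])
  => [a /= /andP [/andP [aS ap] pa] | none].
  apply: (IH (rcons pi a)).
  - by rewrite exec_rcons ex pa.
  - by move=> b; rewrite mem_rcons inE => /orP [/eqP->|]; [done | exact: sub].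
  - by rewrite rcons_uniq ap u.
  - rewrite -ltnS; apply: leq_trans c; apply: proper_card; apply/properP; split.
      apply/subsetP => b; rewrite !inE mem_rcons inE negb_or => /andP [-> /andP [_ ->]] //.
    by exists a; rewrite !inE ?aS ?ap // mem_rcons mem_head.
exists pi; split => // b bS pb; apply/negPn/negP => nb.
by have := none b; rewrite /= bS nb pb.
Qed.

Lemma stable_plan M : stable_model prog M ->
  exists pi, relaxed_plan pre add G pi /\ plan_cost cost pi = interp_cost cost M.
Proof.
move=> st; have Gs := stable_G st; case: st => _ least.
set S := [set a | inr a \in M].
have [pi [ex sub u mx]] := @maxplan S #|A| [::] isT (fun x (h : x \in [::]) => False_ind _ (notF h)) isT (max_card _).
have eqX : [set x | inl x \in Mpi pi] = final_state add set0 pi by apply/setP => x; rewrite !inE.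
have MM : M \subset Mpi pi.
  apply: least; apply/modelP; split.
  + by move=> g gG gM; have := Gs g gG; rewrite (negbTE gM).
  + move=> a aM; rewrite eqX => pa; rewrite inE /=; apply: mx => //; by rewrite inE.
  + move=> a p pa; rewrite !inE /= => ap; exact: (subsetP (@final_add set0 pi a ap) p pa).
have piM : forall a, (a \in pi) = (inr a \in M).
  move=> a; apply/idP/idP => h; first by have := sub a h; rewrite inE.
  by have := subsetP MM _ h; rewrite inE.
exists pi; split.
  rewrite /relaxed_plan ex /=; apply/subsetP => g gG.
  by have := subsetP MM _ (Gs g gG); rewrite inE.
rewrite /plan_cost big_uniq //; apply: eq_bigl => a; exact: piM.
Qed.
End S.

Unset Implicit Arguments.

Theorem mainTheorem2 (X A : finType) (pre add : A -> {set X}) (G : {set X})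
    (cost : A -> nat) :
  ((exists M, stable_model (program pre add G) M) ->
     exists M0, [/\ stable_model (program pre add G) M0,
                    (forall M, stable_model (program pre add G) M ->
                       interp_cost cost M0 <= interp_cost cost M)
                  & hplus_is pre add G cost (Some (interp_cost cost M0))]) /\
  ((~ exists M, stable_model (program pre add G) M) ->
     hplus_is pre add G cost None).
Proof.
split.
- move=> [M st].
  have key : forall n M1, stable_model (program pre add G) M1 -> interp_cost cost M1 <= n ->
    exists M0, stable_model (program pre add G) M0 /\
      forall M, stable_model (program pre add G) M -> interp_cost cost M0 <= interp_cost cost M.
    elim=> [|n IH] M1 s1 c1.
      by exists M1; split=> // M' _; exact: leq_trans c1 (leq0n _).
    case: (classic (exists M', stable_model (program pre add G) M' /\
                     interp_cost cost M' < interp_cost cost M1)) => [[M' [s' c']]|nos].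
      by apply: (IH M' s'); rewrite -ltnS; exact: leq_trans c' c1.
    exists M1; split=> // M' s'; rewrite leqNgt; apply/negP => c'; apply: nos; by exists M'.
  have [M0 [s0 m0]] := key _ M st (leqnn _).
  exists M0; split => //; split; first exact: (@stable_plan X A pre add G cost M0 s0).
  move=> pi rp; apply: (leq_trans (m0 _ (@plan_stable X A pre add G pi rp))); exact: cost_le.
- move=> no pi; apply/negP => rp; apply: no; exists (Mpi A add pi); exact: (@plan_stable X A pre add G pi rp).
Qed.
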